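(* Let $(X,d)$ be a metric space, $\mu$ a non-atomic Borel measure on $X$, $m$ a Borel measure on $X$, $0<p<\infty$, and let $\Gamma^*\subset\Gamma^\mu$ be a family of paths closed under taking non-trivial subpaths such that any two points of $X$ are joined by a path in $\Gamma^*$. Let $F$ be a closed subset of $X$ and let $f:X\to\mathbb R$ be $ACC_p$ with $f=0$ $m$-almost everywhere on $F$. If $\rho$ is an upper gradient of $f$, then $\rho\chi_{X\setminus F}$ is a $p$-weak upper gradient of $f$.
   Context: A path is a continuous map $\gamma:[a,b]\to X$; a subpath is a restriction to a subinterval, trivial if that interval is a point; $\mathrm{Im}(\gamma)=\gamma([a,b])$. $\mu$ non-atomic: $\mu(\{x\})=0$ for all $x$. $\Gamma^\mu$ is the set of all non-trivial injective paths $\gamma$ with $0<\mu(\mathrm{Im}(\tilde\gamma))<\infty$ for every non-trivial subpath $\tilde\gamma$. For Borel $g\ge0$, $\int_\gamma g:=\int_{\mathrm{Im}(\gamma)}g\,d\mu$. For $\gamma:[a,b]\to X$ in $\Gamma^\mu$, $h(\gamma)=\mu(\mathrm{Im}(\gamma))$, $\nu_\gamma(x)=\mu(\gamma([a,x]))$ (a bijection onto $[0,h(\gamma)]$), $\gamma_h=\gamma\circ\nu_\gamma^{-1}$. For $\Gamma\subset\Gamma^*$, $\mathrm{Mod}_p(\Gamma)=\inf\int_Xg^p\,dm$ over Borel $g\ge0$ with $\int_\gamma g\ge1$ for all $\gamma\in\Gamma$; ''$p$-almost every path'' means all paths of $\Gamma^*$ outside a family of $p$-modulus zero. A Borel $\rho\ge0$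 is an upper gradient of $f$ if $|f(x)-f(y)|\le\int_\gamma\rho$ for every $\gamma\in\Gamma^*$ with endpoints $x,y$ (with $f(x),f(y)$ finite), and a $p$-weak upper gradient if this holds for $p$-almost every $\gamma\in\Gamma^*$. $f$ is $ACC_p$ if $f\circ\gamma_h$ is absolutely continuous for $p$-almost every $\gamma\in\Gamma^*$. *)

(* Defs.v *)
From HB Require Import structures.
From mathcomp Require Import all_boot all_order all_algebra.
From mathcomp Require Import all_classical all_reals all_analysis.
From mathcomp Require Import measurable_realfun.

Set Implicit Arguments.
Unset Strict Implicit.
Unset Printing Implicit Defensive.

Import Order.TTheory GRing.Theory Num.Theory.
Import numFieldNormedType.Exports.

Local Open Scope classical_set_scope.
Local Open Scope ring_scope.

Notation Borel X := (g_sigma_algebraType (@open X)).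

Section Defs.
Variables (R : realType) (X : pseudoPMetricType R).

(* A xpath gamma : [a, b] -> X, represented by its endpoints and a function
   R -> X (only its values on [a, b] matter). *)
Record xpath := XPath { pa : R; pb : R; pf : R -> X }.

Definition is_path (g : xpath) :=
  pa g <= pb g /\ {within `[pa g, pb g], continuous pf g}.

Definition nontrivial (g : xpath) := pa g < pb g.

Definition Im (g : xpath) : set X := pf g @` `[pa g, pb g].

Definition subpath (g : xpath) (c d : R) := XPath c d (pf g).

Definition is_subpath_range (g : xpath) (c d : R) :=
  pa g <= c /\ c <= d /\ d <= pb g.

Definition Gamma_mu (mu : set (Borel X) -> \bar R) : set xpath :=
  [set g | is_path g /\ nontrivial g /\ {in `[pa g, pb g] &, injective (pf g)} /\
     forall c d, is_subpath_range g c d -> c < d ->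
       (0 < mu (Im (subpath g c d) : set (Borel X)))%E /\
       (mu (Im (subpath g c d) : set (Borel X)) < +oo)%E].

Definition lint (mu : {measure set (Borel X) -> \bar R}) (g : Borel X -> \bar R)
  (gm : xpath) : \bar R :=
  (\int[mu]_(x in (Im gm : set (Borel X))) g x)%E.

Definition hlen (mu : set (Borel X) -> \bar R) (g : xpath) : \bar R :=
  mu (Im g : set (Borel X)).

Definition nu (mu : set (Borel X) -> \bar R) (g : xpath) (x : R) : \bar R :=
  mu (pf g @` `[pa g, x] : set (Borel X)).

Definition nu_inv (mu : set (Borel X) -> \bar R) (g : xpath) (t : R) : R :=
  xget (pa g) [set x | x \in `[pa g, pb g] /\ nu mu g x = t%:E].

Definition gamma_h (mu : set (Borel X) -> \bar R) (g : xpath) : R -> X :=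
  pf g \o nu_inv mu g.

Definition abs_continuous_on (F : R -> R) (u v : R) :=
  forall e : R, 0 < e -> exists2 delta : R, 0 < delta &
    forall (n : nat) (s t : 'I_n -> R),
      (forall i, u <= s i /\ s i <= t i /\ t i <= v) ->
      (forall i j, i != j -> t i <= s j \/ t j <= s i) ->
      \sum_(i < n) (t i - s i) < delta ->
      \sum_(i < n) `|F (t i) - F (s i)| < e.

Definition admissible (mu : {measure set (Borel X) -> \bar R}) (Gam : set xpath)
  (g : Borel X -> \bar R) :=
  measurable_fun setT g /\ (forall x, (0 <= g x)%E) /\
  forall gm, Gam gm -> (1 <= lint mu g gm)%E.

Definition Modp (mu m : {measure set (Borel X) -> \bar R}) (p : R) (Gam : set xpath)
  : \bar R :=
  ereal_inf [set (\int[m]_x (g x `^ p))%E | g in admissible mu Gam].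

Definition p_ae (mu m : {measure set (Borel X) -> \bar R}) (p : R)
  (Gstar : set xpath) (P : xpath -> Prop) :=
  exists2 G0 : set xpath, G0 `<=` Gstar /\ Modp mu m p G0 = 0%E &
    forall gm, Gstar gm -> ~ G0 gm -> P gm.

Definition ug_ineq (mu : {measure set (Borel X) -> \bar R}) (f : X -> R)
  (rho : Borel X -> \bar R) (gm : xpath) :=
  (`|f (pf gm (pa gm)) - f (pf gm (pb gm))|%:E <= lint mu rho gm)%E.

Definition upper_gradient (mu : {measure set (Borel X) -> \bar R}) (Gstar : set xpath)
  (f : X -> R) (rho : Borel X -> \bar R) :=
  measurable_fun setT rho /\ (forall x, (0 <= rho x)%E) /\
  forall gm, Gstar gm -> ug_ineq mu f rho gm.

Definition p_weak_upper_gradient (mu m : {measure set (Borel X) -> \bar R}) (p : R)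
  (Gstar : set xpath) (f : X -> R) (rho : Borel X -> \bar R) :=
  measurable_fun setT rho /\ (forall x, (0 <= rho x)%E) /\
  p_ae mu m p Gstar (ug_ineq mu f rho).

Definition ACC_p (mu m : {measure set (Borel X) -> \bar R}) (p : R)
  (Gstar : set xpath) (f : X -> R) :=
  p_ae mu m p Gstar (fun gm =>
    abs_continuous_on (f \o gamma_h mu gm) 0 (fine (hlen mu gm))).

End Defs.

(* Main.v *)
Require Import Defs.
From HB Require Import structures.
From mathcomp Require Import all_boot all_order all_algebra.
From mathcomp Require Import all_classical all_reals all_analysis.
From mathcomp Require Import measurable_realfun.
From mathcomp Require Import lra.
Import Order.TTheory GRing.Theory Num.Theory.
Import numFieldNormedType.Exports.
Local Open Scope classical_set_scope.
Local Open Scope ring_scope.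
Section Aux.
Context (R : realType) (X : pseudoPMetricType R) (hX : hausdorff_space X).

Lemma closed_meas (A : set X) : closed A -> measurable (A : set (Borel X)).
Proof.
move=> cA; rewrite -[A]setCK; apply: measurableC; apply: sub_gen_smallest.
exact: closed_openC.
Qed.

Lemma set1_meas (x : X) : measurable ([set x] : set (Borel X)).
Proof. apply: closed_meas; apply: accessible_closed_set1; exact: hausdorff_accessible. Qed.

Lemma img_meas (g : R -> X) (c d : R) : {within `[c,d], continuous g} ->
  measurable (g @` `[c,d] : set (Borel X)).
Proof.
move=> cg; apply: closed_meas; apply: compact_closed => //.
apply: (continuous_compact cg); exact: segment_compact.
Qed.

Lemma mem_meas (N : set (Borel X)) : measurable N ->
  measurable_fun setT (fun x : Borel X => x \in N).
Proof.
move=> mN _ Y _; rewrite setTI.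
have -> : (fun x : Borel X => x \in N) @^-1` Y =
  (N `&` [set _ | Y true]) `|` (~` N `&` [set _ | Y false]).
  apply/seteqP; split => x /=.
    by case: (pselect (N x)) => Nx; [rewrite mem_set//; left|rewrite memNset//; right].
  by case=> -[Nx Yx]; [rewrite mem_set|rewrite memNset].
have cst P : measurable ([set _ : Borel X | P] : set (Borel X)).
  case: (pselect P) => h.
    by rewrite (_ : [set _ | _] = setT)//; apply/seteqP; split.
  by rewrite (_ : [set _ | _] = set0)//; apply/seteqP; split.
apply: measurableU; apply: measurableI => //; exact: measurableC.
Qed.
End Aux.
Section PathFacts.
Context (R : realType) (X : pseudoPMetricType R) (hX : hausdorff_space X)
  (mu : {measure set Borel X -> \bar R})
  (mu0 : forall x : X, mu [set x] = 0%E)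
  (g : xpath X) (hg : Gamma_mu mu g).

Local Notation a := (pa g).
Local Notation b := (pb g).
Local Notation γ := (pf g).

Lemma ab : a < b. Proof. by case: hg => _ []. Qed.

Lemma cont_sub c d : a <= c -> d <= b -> {within `[c,d], continuous γ}.
Proof.
move=> ac db; case: hg => -[_ cg] _; apply: continuous_subspaceW cg.
move=> x; rewrite /= !in_itv/= => /andP[cx xd].
by rewrite (le_trans ac cx) (le_trans xd db).
Qed.

Lemma seg_meas c d : a <= c -> d <= b -> measurable (γ @` `[c,d] : set (Borel X)).
Proof. by move=> ac db; apply: img_meas => //; exact: cont_sub. Qed.

Lemma seg_sub c d : a <= c -> d <= b -> γ @` `[c,d] `<=` γ @` `[a,b].
Proof.
move=> ac db y [x]; rewrite /= !in_itv/= => /andP[cx xd] <-; exists x => //.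
by rewrite /= in_itv/= (le_trans ac cx) (le_trans xd db).
Qed.

Lemma Im_fin : (mu (γ @` `[a,b] : set (Borel X)) < +oo)%E.
Proof.
case: hg => _ [_ [_ h]].
by have [] := h a b (conj (lexx _) (conj (ltW ab) (lexx _))) ab.
Qed.

Lemma seg_fin c d : a <= c -> d <= b -> (mu (γ @` `[c,d] : set (Borel X)) < +oo)%E.
Proof.
move=> ac db; apply: le_lt_trans Im_fin; apply: le_measure; rewrite ?inE.
- exact: seg_meas.
- exact: seg_meas.
- exact: seg_sub.
Qed.
End PathFacts.
Section PathFacts2.
Context (R : realType) (X : pseudoPMetricType R) (hX : hausdorff_space X)
  (mu : {measure set Borel X -> \bar R})
  (mu0 : forall x : X, mu [set x] = 0%E)
  (g : xpath X) (hg : Gamma_mu mu g).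

Local Notation a := (pa g).
Local Notation b := (pb g).
Local Notation γ := (pf g).

Let s1m := @set1_meas _ _ hX.
Let segm := @seg_meas _ _ hX _ _ hg.
Lemma inj_g : {in `[a,b] &, injective γ}.
Proof. by case: hg => _ [_ []]. Qed.

Lemma inab [x] : a <= x -> x <= b -> x \in `[a,b].
Proof. by move=> ax xb; rewrite in_itv/= ax xb. Qed.

Lemma seg_add s t : a <= s -> s <= t -> t <= b ->
  mu (γ @` `[a,t] : set (Borel X)) =
  (mu (γ @` `[a,s] : set (Borel X)) + mu (γ @` `[s,t] : set (Borel X)))%E.
Proof.
move=> as_ st tb.
have E : (γ @` `[a,t] : set (Borel X)) =
  γ @` `[a,s] `|` (γ @` `[s,t] `\ γ s).
  apply/seteqP; split => y.
    case=> x; rewrite /= in_itv/= => /andP[ax xt] <-.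
    have [xs|sx] := leP x s.
      by left; exists x => //; rewrite /= in_itv/= ax xs.
    right; split; first by exists x => //; rewrite /= in_itv/= (ltW sx) xt.
    move=> /= e.
    have xs := inj_g _ _ (inab ax (le_trans xt tb)) (inab as_ (le_trans st tb)) e.
    by move: sx; rewrite xs ltxx.
  case=> [[x]|[[x]]]; rewrite /= in_itv/= => /andP[h1 h2] <-.
    by exists x => //; rewrite /= in_itv/= h1 (le_trans h2 st).
  by move=> _; exists x => //; rewrite /= in_itv/= (le_trans as_ h1) h2.
have ms : measurable (γ @` `[s,t] : set (Borel X)) by apply: segm.
rewrite E measureU//; last 3 first.
- by apply: segm => //; exact: le_trans st tb.
- by apply: measurableD => //; exact: s1m.
- apply/seteqP; split => // y [[x1]]; rewrite /= in_itv/= => /andP[h1 h2] <-.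
  move=> [[x2]]; rewrite /= in_itv/= => /andP[h3 h4] e; apply.
  have i2 : x2 \in `[a,b] by rewrite inab// ?(le_trans as_ h3) ?(le_trans h4 tb).
  have i1 : x1 \in `[a,b] by rewrite inab// (le_trans h2 (le_trans st tb)).
  have e21 := inj_g _ _ i2 i1 e.
  have x1s : x1 = s by apply/le_anti; rewrite h2 -e21 h3.
  by rewrite x1s.
congr (_ + _)%E.
rewrite [RHS](measureDI mu ms (s1m (γ s))).
rewrite [X in (_ + X)%E](_ : _ = 0%E) ?adde0 //.
apply/le_anti; rewrite measure_ge0 andbT -(mu0 (γ s)).
apply: le_measure; rewrite ?inE//; first exact: measurableI (s1m _).

Qed.
End PathFacts2.
Section PathFacts3.
Context (R : realType) (X : pseudoPMetricType R) (hX : hausdorff_space X)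
  (mu : {measure set Borel X -> \bar R})
  (mu0 : forall x : X, mu [set x] = 0%E)
  (g : xpath X) (hg : Gamma_mu mu g).

Local Notation a := (pa g).
Local Notation b := (pb g).
Local Notation γ := (pf g).

Let s1m := @set1_meas _ _ hX.
Let segm := @seg_meas _ _ hX _ _ hg.
Let segf := @seg_fin _ _ hX _ _ hg.
Let sadd := @seg_add _ _ hX _ mu0 _ hg.
Let injg := @inj_g _ _ _ _ hg.
Let inab' := @inab _ _ g.

Lemma nu_ge0 s : (0 <= nu mu g s)%E.
Proof. exact: measure_ge0. Qed.

Lemma nu_fin [s] : a <= s -> s <= b -> nu mu g s \is a fin_num.
Proof. by move=> as_ sb; rewrite ge0_fin_numE ?nu_ge0 //; exact: segf. Qed.

Lemma segfin [s t] : a <= s -> t <= b -> mu (γ @` `[s,t] : set (Borel X)) \is a fin_num.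
Proof. by move=> as_ tb; rewrite ge0_fin_numE ?measure_ge0 //; exact: segf. Qed.

Lemma nu_add [s t] : a <= s -> s <= t -> t <= b ->
  fine (nu mu g t) = fine (nu mu g s) + fine (mu (γ @` `[s,t] : set (Borel X))).
Proof.
move=> as_ st tb; rewrite /nu (sadd _ _ as_ st tb) fineD //.
- exact: (segfin (le_refl _) (le_trans st tb)).
- exact: segfin.
Qed.

Lemma mu_pos [s t] : a <= s -> s < t -> t <= b ->
  0 < fine (mu (γ @` `[s,t] : set (Borel X))).
Proof.
move=> as_ st tb; case: hg => _ [_ [_ h]].
have [h1 h2] := h s t (conj as_ (conj (ltW st) tb)) st.
by apply: fine_gt0; rewrite h1 h2.
Qed.

Lemma nu_lt [s t] : a <= s -> s < t -> t <= b ->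
  fine (nu mu g s) < fine (nu mu g t).
Proof.
by move=> as_ st tb; rewrite (nu_add as_ (ltW st) tb) ltrDl mu_pos.
Qed.

Lemma nu_invK [s] : a <= s -> s <= b -> nu_inv mu g (fine (nu mu g s)) = s.
Proof.
move=> as_ sb; rewrite /nu_inv; apply: xget_unique.
  by split; [exact: inab|rewrite fineK // nu_fin].
move=> y [yab e]; move: yab; rewrite in_itv/= => /andP[ay yb].
have fe : fine (nu mu g y) = fine (nu mu g s) by rewrite e.
have [ys|sy|//] := ltgtP y s.
  by move: (nu_lt ay ys sb); rewrite fe ltxx.
by move: (nu_lt as_ sy yb); rewrite fe ltxx.
Qed.

Lemma gh [s] : a <= s -> s <= b -> gamma_h mu g (fine (nu mu g s)) = γ s.
Proof. by move=> as_ sb; rewrite /gamma_h /= nu_invK. Qed.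

Lemma nu_bnd [s] : a <= s -> s <= b ->
  0 <= fine (nu mu g s) /\ fine (nu mu g s) <= fine (hlen mu g).
Proof.
move=> as_ sb; split; first exact/fine_ge0/nu_ge0.
have -> : hlen mu g = nu mu g b by [].
rewrite (nu_add as_ sb (le_refl _)).
by rewrite lerDl fine_ge0 // measure_ge0.
Qed.

End PathFacts3.
Section PathFacts4.
Context (R : realType) (X : pseudoPMetricType R) (hX : hausdorff_space X)
  (mu : {measure set Borel X -> \bar R})
  (mu0 : forall x : X, mu [set x] = 0%E)
  (g : xpath X) (hg : Gamma_mu mu g).

Local Notation a := (pa g).
Local Notation b := (pb g).
Local Notation γ := (pf g).

Let s1m := @set1_meas _ _ hX.
Let segm := @seg_meas _ _ hX _ _ hg.
Let segf := @seg_fin _ _ hX _ _ hg.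
Let injg := @inj_g _ _ _ _ hg.
Let inab' := @inab _ _ g.

Lemma mu_small x δ : a <= x -> x <= b -> 0 < δ ->
  exists2 η, 0 < η & forall s t, a <= s -> s <= t -> t <= b ->
    x - η <= s -> t <= x + η -> (mu (γ @` `[s,t] : set (Borel X)) < δ%:E)%E.
Proof.
move=> ax xb d0.
pose e n := (n.+1%:R : R)^-1.
pose A n := (γ @` `[Num.max a (x - e n), Num.min b (x + e n)] : set (Borel X)).
have e0 n : 0 < e n by rewrite invr_gt0.
have leA n : a <= Num.max a (x - e n) by rewrite le_max lexx.
have leB n : Num.min b (x + e n) <= b by rewrite ge_min lexx orTb.
have mA n : measurable (A n) := segm _ _ (leA n) (leB n).
have Afin : (mu (A 0%N) < +oo)%E := segf _ _ (leA 0%N) (leB 0%N).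
have decr : nonincreasing_seq A.
  move=> n m nm; apply/subsetPset => y [t]; rewrite /= in_itv/= => /andP[h1 h2] <-; exists t => //.
  have em : e m <= e n by rewrite lef_pV2 ?posrE // ler_nat ltnS.
  move: h1 h2; rewrite /= in_itv/= ge_max le_min => /andP[h1 h1'] /andP[h2 h2'].
  by rewrite ge_max le_min h1 h2 /=; apply/andP; split; lra.
have capS : \bigcap_n A n `<=` [set γ x].
  move=> y Ay; have [t0 + e0'] := Ay 0%N I; rewrite /= in_itv/= ge_max le_min.
  move=> /andP[/andP[at0 _] /andP[t0b _]].
  suff t0x : t0 = x by rewrite /= -e0' t0x.
  have tn n : `|t0 - x| <= e n.
    have [tn + en] := Ay n I; rewrite /= in_itv/= ge_max le_min.
    move=> /andP[/andP[atn h1] /andP[tnb h2]].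
    have := injg _ _ (inab' _ atn tnb) (inab' _ at0 t0b); rewrite en e0' => /(_ erefl) tnt0; rewrite tnt0 in h1 h2.
    rewrite ler_norml; apply/andP; split; lra.
  apply/eqP; rewrite -subr_eq0; apply/negPn/negP => nx.
  have r0 : 0 < `|t0 - x| by rewrite normr_gt0.
  have ir0 : 0 <= `|t0 - x|^-1 by rewrite invr_ge0 ltW.
  have := archi_boundP ir0.
  set n := Num.Def.archi_bound _ => hn.
  have : e n < `|t0 - x|.
    rewrite /e -[ltRHS]invrK ltf_pV2 ?posrE ?invr_gt0 //.
    by apply: lt_le_trans hn _; rewrite ler_nat.
  by rewrite ltNge tn.
have mcap := bigcapT_measurable mA.
have cap0 : mu (\bigcap_n A n) = 0%E.
  apply/le_anti; rewrite measure_ge0 andbT -(mu0 (γ x)).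
  by apply: le_measure; rewrite ?inE //; exact: s1m.
have := nonincreasing_cvg_mu Afin mA mcap decr; rewrite cap0 => /fine_cvgP[finA cvA].
have := cvgr_lt _ cvA _ d0; move: finA => [N1 _ H1] [N2 _ H2].
pose n := maxn N1 N2.
have n1 : (N1 <= n)%N by rewrite leq_maxl.
have n2 : (N2 <= n)%N by rewrite leq_maxr.
exists (e n) => // s t as_ st tb xs tx.
apply: (@le_lt_trans _ _ (mu (A n))).
  apply: le_measure; rewrite ?inE //; first exact: segm.
  move=> y [z]; rewrite /= in_itv/= => /andP[h1 h2] <-; exists z => //.
  by rewrite /= in_itv/= ge_max le_min; apply/andP; split; apply/andP; split; lra.
move: (H1 n n1) (H2 n n2) => /= fA hA; by rewrite -(fineK fA) lte_fin.
Qed.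

End PathFacts4.
Section PathFacts5.
Context (R : realType) (X : pseudoPMetricType R) (hX : hausdorff_space X)
  (mu : {measure set Borel X -> \bar R})
  (mu0 : forall x : X, mu [set x] = 0%E)
  (g : xpath X) (hg : Gamma_mu mu g).

Local Notation a := (pa g).
Local Notation b := (pb g).
Local Notation γ := (pf g).

Lemma u_cont (f : X -> R) :
  abs_continuous_on (f \o gamma_h mu g) 0 (fine (hlen mu g)) ->
  forall x, a <= x -> x <= b -> forall e, 0 < e -> exists2 η, 0 < η &
   forall t, a <= t -> t <= b -> `|t - x| <= η -> `|f (γ t) - f (γ x)| < e.
Proof.
move=> AC x ax xb e e0.
have [δ d0 Hd] := AC e e0.
have [η η0 Hη] := @mu_small _ _ hX _ mu0 _ hg x δ ax xb d0.
have key s t : a <= s -> s <= t -> t <= b -> x - η <= s -> t <= x + η ->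
    `|f (γ t) - f (γ s)| < e.
  move=> as_ st tb h1 h2.
  have sb := le_trans st tb; have at_ := le_trans as_ st.
  have := Hd 1%N (fun _ => fine (nu mu g s)) (fun _ => fine (nu mu g t)).
  rewrite !big_ord1 /= (@gh _ _ hX _ mu0 _ hg s) // (@gh _ _ hX _ mu0 _ hg t) //.
  apply.
  - move=> _; have [h3 h4] := @nu_bnd _ _ hX _ mu0 _ hg s as_ sb.
    have [h5 h6] := @nu_bnd _ _ hX _ mu0 _ hg t at_ tb.
    split=> //; split=> //.
    by rewrite (@nu_add _ _ hX _ mu0 _ hg s t as_ st tb) lerDl fine_ge0 // measure_ge0.
  - by move=> i j; rewrite !ord1 eqxx.
  - rewrite (@nu_add _ _ hX _ mu0 _ hg s t as_ st tb).
    have := Hη s t as_ st tb h1 h2.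
    rewrite -(fineK (@segfin _ _ hX _ _ hg s t as_ tb)) lte_fin => hm.
    lra.
exists η => // t at_ tb.
rewrite ler_norml => /andP[h1 h2].
have [xt|tx] := leP x t.
  by apply: key => //; lra.
rewrite distrC; apply: key => //; [exact: ltW|lra|lra].
Qed.
End PathFacts5.
Section PathMain.
Context (R : realType) (X : pseudoPMetricType R) (hX : hausdorff_space X)
  (mu : {measure set Borel X -> \bar R})
  (mu0 : forall x : X, mu [set x] = 0%E)
  (Gstar : set (xpath X))
  (hsub : forall g c d, Gstar g -> is_subpath_range g c d -> c < d ->
            Gstar (subpath g c d))
  (f : X -> R) (F : set X) (mF : measurable (F : set (Borel X)))
  (N : set (Borel X)) (mN : measurable N)
  (hNF : forall x : X, F x -> f x <> 0 -> N x)
  (rho : Borel X -> \bar R) (hrho : upper_gradient mu Gstar f rho)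
  (g : xpath X) (hg : Gamma_mu mu g) (Gg : Gstar g)
  (muN : mu ((pf g @` `[pa g, pb g] : set (Borel X)) `&` N) = 0%E)
  (AC : abs_continuous_on (f \o gamma_h mu g) 0 (fine (hlen mu g))).

Local Notation a := (pa g).
Local Notation b := (pb g).
Local Notation γ := (pf g).

Let rho' := fun x : Borel X => if x \in (F : set (Borel X)) then 0%E else rho x.
Let segm := @seg_meas _ _ hX _ _ hg.
Let s1m := @set1_meas _ _ hX.

Let mrho : measurable_fun setT rho. Proof. by case: hrho. Qed.
Let rho0 x : (0 <= rho x)%E. Proof. by case: hrho => _ []. Qed.
Let mrho' : measurable_fun setT rho'.
Proof.
by apply: measurable_fun_ifT => //; exact: mem_meas.
Qed.
Let rho'0 x : (0 <= rho' x)%E. Proof. by rewrite /rho'; case: ifP. Qed.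

Let mImN : measurable ((γ @` `[a, b] : set (Borel X)) `&` N).
Proof. by apply: measurableI => //; exact: segm. Qed.

Lemma F1 c d (P : set (Borel X)) : a <= c -> d <= b -> measurable P -> mu P = 0%E ->
  (forall t, c <= t -> t <= d -> F (γ t) -> P (γ t)) ->
  (\int[mu]_(x in (γ @` `[c, d] : set (Borel X))) rho x =
   \int[mu]_(x in (γ @` `[c, d] : set (Borel X))) rho' x)%E.
Proof.
move=> ac db mP P0 hP.
have mD := segm c d ac db.
rewrite (@ge0_negligible_integral _ _ _ mu _ _ rho mP mD) //; last first.
  exact: measurable_funS mrho.
rewrite [RHS](@ge0_negligible_integral _ _ _ mu _ _ rho' mP mD) //; last first.
  exact: measurable_funS mrho'.
apply: eq_integral => x; rewrite inE => -[[t]]; rewrite /= in_itv/= => /andP[ct td] <- nP.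
rewrite /rho' memNset //; move=> Ft; exact/nP/hP.
Qed.

Lemma piece [c d] : a <= c -> c < d -> d <= b ->
  (`|f (γ c) - f (γ d)|%:E <=
     \int[mu]_(x in (γ @` `[c, d] : set (Borel X))) rho x)%E.
Proof.
move=> ac cd db; case: hrho => _ [_ ug].
exact: (ug _ (hsub _ _ _ Gg (conj ac (conj (ltW cd) db)) cd)).
Qed.


Let S := [set t | a <= t /\ t <= b /\ F (γ t) /\ f (γ t) = 0].

Let notS t : a <= t -> t <= b -> F (γ t) -> ~ S t ->
  ((γ @` `[a, b] : set (Borel X)) `&` N) (γ t).
Proof.
move=> at_ tb Ft nS; split; first by exists t => //; rewrite /= in_itv/= at_ tb.
apply: hNF => // f0; exact: nS.
Qed.

Lemma path_ug : ug_ineq mu f rho' g.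
Proof.
rewrite /ug_ineq /lint.
have ab := @ab _ _ _ _ hg.
have mIm : measurable (γ @` `[a, b] : set (Borel X)) by exact: segm.
have [[s0 Ss0]|S0] := pselect (S !=set0); last first.
  apply: le_trans (piece (le_refl _) ab (le_refl _)) _.
  rewrite (@F1 a b _ (le_refl _) (le_refl _) mImN muN) //.
  move=> t at_ tb Ft; apply: notS => // St; apply: S0; by exists t.
have lbS : lbound S a by move=> t [].
have ubS : ubound S b by move=> t [_ []].
have hlS : has_lbound S by exists a.
have huS : has_ubound S by exists b.
pose k1 := inf S; pose k2 := sup S.
have ak1 : a <= k1 by apply: lb_le_inf => //; exists s0.
have k1s0 : k1 <= s0 by apply: ge_inf.
have k2s0 : s0 <= k2 by apply: sup_upper_bound => //; split => //; exists s0.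
have k2b : k2 <= b by apply: ge_sup => //; exists s0.
have s0b : s0 <= b by case: Ss0 => _ [].
have k1b : k1 <= b := le_trans k1s0 s0b.
have ak2 : a <= k2 by apply: le_trans k2s0; case: Ss0.
have zero_at k : a <= k -> k <= b ->
    (forall η, 0 < η -> exists2 s, S s & `|s - k| <= η) -> f (γ k) = 0.
  move=> ak kb H; apply/eqP; rewrite -normr_eq0; apply/negPn/negP => nz.
  have e0 : 0 < `|f (γ k)| by rewrite lt_neqAle eq_sym nz normr_ge0.
  have [η η0 Hη] := @u_cont _ _ hX _ mu0 _ hg f AC k ak kb _ e0.
  have [s [as_ [sb [_ fs]]] sk] := H η η0.
  by have := Hη s as_ sb sk; rewrite fs sub0r normrN ltxx.
have u1 : f (γ k1) = 0.
  apply: zero_at => // η η0.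
  have [s Ss sk] := @inf_adherent _ S η η0 (conj (ex_intro _ s0 Ss0) hlS).
  exists s => //; rewrite ger0_norm ?subr_ge0 ?ge_inf //; rewrite -/k1 in sk; lra.
have u2 : f (γ k2) = 0.
  apply: zero_at => // η η0.
  have [s Ss sk] := @sup_adherent _ S η η0 (conj (ex_intro _ s0 Ss0) huS).
  rewrite -/k2 in sk.
  have sk2 : s <= k2 by apply: sup_upper_bound => //; split => //; exists s0.
  by exists s => //; rewrite ler0_norm ?subr_le0 //; lra.
pose A := (γ @` `[a, k1] : set (Borel X)).
pose B := (γ @` `[k2, b] : set (Borel X)).
have bndA : (`|f (γ a)|%:E <= \int[mu]_(x in A) rho' x)%E.
  have [ak|] := ltP a k1; last first.
    move=> k1a; have -> : a = k1 by apply/le_anti; rewrite ak1 k1a.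
    by rewrite u1 normr0 integral_ge0.
  have := piece (le_refl _) ak k1b; rewrite u1 subr0 => /le_trans; apply.
  rewrite (@F1 a k1 ((γ @` `[a, b] : set (Borel X)) `&` N `|` [set γ k1])
    (le_refl _) k1b) //.
  - exact: measurableU.
  - apply/le_anti; rewrite measure_ge0 andbT.
    apply: le_trans (measureU2 _ _ _) _ => //.
    set Q := (X in (X + _)%E); have -> : Q = 0%E by exact: muN.
    set Q' := (X in (_ + X)%E); have -> : Q' = 0%E by exact: mu0.
    by rewrite adde0.
  - move=> t at_ tk Ft; have [tk'|kt] := ltP t k1; last first.
      by right; rewrite /= (_ : t = k1) //; apply/le_anti; rewrite tk kt.
    left; apply: notS => //; first lra.
    by move=> St; move: tk'; rewrite ltNge ge_inf.
have hsup : has_sup S by split => //; exists s0.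
have bndB : (`|f (γ b)|%:E <= \int[mu]_(x in B) rho' x)%E.
  have [kb|] := ltP k2 b; last first.
    move=> bk2; have -> : b = k2 by apply/le_anti; rewrite k2b bk2.
    by rewrite u2 normr0 integral_ge0.
  have := piece ak2 kb (le_refl _); rewrite u2 sub0r normrN => /le_trans; apply.
  rewrite (@F1 k2 b ((γ @` `[a, b] : set (Borel X)) `&` N `|` [set γ k2])
    ak2 (le_refl _)) //.
  - exact: measurableU.
  - apply/le_anti; rewrite measure_ge0 andbT.
    apply: le_trans (measureU2 _ _ _) _ => //.
    set Q := (X in (X + _)%E); have -> : Q = 0%E by exact: muN.
    set Q' := (X in (_ + X)%E); have -> : Q' = 0%E by exact: mu0.
    by rewrite adde0.
  - move=> t kt tb Ft; have [kt'|tk] := ltP k2 t; last first.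
      by right; rewrite /= (_ : t = k2) //; apply/le_anti; rewrite kt tk.
    left; apply: notS => //; first lra.
    by move=> St; move: kt'; rewrite ltNge (sup_upper_bound hsup St).
have mA : measurable A by apply: segm.
have mB : measurable B by apply: segm.
pose B' := B `\` [set γ k2].
have mB' : measurable B' by apply: measurableD => //; exact: s1m.
have eB : (\int[mu]_(x in B) rho' x = \int[mu]_(x in B') rho' x)%E.
  rewrite (@ge0_negligible_integral _ _ _ mu B [set γ k2] rho' (s1m _) mB) //.
  exact: measurable_funS mrho'.
have dAB : [disjoint A & B'].
  rewrite disj_set2E; apply/eqP/seteqP; split => // y [[t1]].
  rewrite /= in_itv/= => /andP[h1 h2] <- [[t2]].
  rewrite /= in_itv/= => /andP[h3 h4] e ne; apply: ne.
  have e21 := @inj_g _ _ _ _ hg t2 t1 (@inab _ _ g _ (le_trans ak2 h3) h4)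
    (@inab _ _ g _ h1 (le_trans h2 k1b)) e.
  have k1k2 : k1 <= k2 := le_trans k1s0 k2s0.
  have -> : t1 = k2 by apply/le_anti; rewrite -e21 h3 andbT; rewrite e21; lra.
  by [].
apply: (@le_trans _ _ ((`|f (γ a)| + `|f (γ b)|)%:E)).
  by rewrite lee_fin ler_normB.
rewrite EFinD; apply: le_trans (leeD bndA bndB) _.
rewrite eB -(ge0_integral_setU mu mA mB' _ _ dAB); last 2 first.
- exact: measurable_funS mrho'.
- by move=> x _; apply: rho'0.
apply: ge0_subset_integral => //.
- exact: measurableU.
- exact: measurable_funS mrho'.
move=> y [[t]|[[t]]]; rewrite /= in_itv/= => /andP[h1 h2] <-; rewrite ?/B'.
  by exists t => //; rewrite /= in_itv/= h1 (le_trans h2 k1b).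
by move=> _; exists t => //; rewrite /= in_itv/= h2 (le_trans ak2 h1).
Qed.

End PathMain.

Theorem lemma5p1 (R : realType) (X : pseudoPMetricType R)
  (hX : hausdorff_space X)
  (mu m : {measure set Borel X -> \bar R})
  (mu_nonatomic : forall x : X, mu [set x] = 0%E)
  (p : R) (hp : 0 < p)
  (Gstar : set (xpath X))
  (hGstar : Gstar `<=` Gamma_mu mu)
  (hsub : forall g c d, Gstar g -> is_subpath_range g c d -> c < d ->
            Gstar (subpath g c d))
  (hjoin : forall x y : X, x <> y -> exists2 g, Gstar g &
            (pf g (pa g) = x /\ pf g (pb g) = y) \/
            (pf g (pa g) = y /\ pf g (pb g) = x))
  (F : set X) (hF : closed F)
  (f : X -> R) (hf : ACC_p mu m p Gstar f)
  (hfF : {ae m, forall x : Borel X, F x -> f x = 0})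
  (rho : Borel X -> \bar R) (hrho : upper_gradient mu Gstar f rho) :
  p_weak_upper_gradient mu m p Gstar f
    (fun x => if x \in (F : set (Borel X)) then 0%E else rho x).
Proof.
have mF : measurable (F : set (Borel X)) := @closed_meas _ _ _ hF.
case: (hrho) => mrho [rho0 ug].
move: hf => [G0 [G0S MG0] hG0].
move: hfF => [N [mN mN0 NS]].
have hNF : forall x : X, F x -> f x <> 0 -> N x.
  by move=> x Fx fx; apply: NS => /(_ Fx).
have mIm gm : Gstar gm -> measurable (pf gm @` `[pa gm, pb gm] : set (Borel X)).
  by move=> Ggm; apply: (@seg_meas _ _ hX _ _ (hGstar _ Ggm)).
split.
  by apply: measurable_fun_ifT => //; exact: mem_meas.
split.
  by move=> x; case: ifP.
pose G1 := [set gm | Gstar gm /\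
  mu ((pf gm @` `[pa gm, pb gm] : set (Borel X)) `&` N) != 0%E].
exists (G0 `|` G1).
  split; first by move=> gm [/G0S|[]].
  apply/le_anti; apply/andP; split; last first.
    apply: le_ereal_inf_tmp => y [h _ <-]; apply: integral_ge0 => x _.
    exact: poweR_ge0.
  rewrite -MG0; apply: le_ereal_inf_tmp => y [h0 [mh0 [h00 adm0]] <-].
  pose h := fun x => if x \in N then +oo%E else h0 x.
  have mh : measurable_fun setT h.
    by apply: measurable_fun_ifT => //; exact: mem_meas.
  have h0h x : (h0 x <= h x)%E by rewrite /h; case: ifP => _; [exact: leey|exact: lexx].
  apply: (@le_trans _ _ (\int[m]_x (h x `^ p))%E).
    apply: ereal_inf_lbound; exists h => //.
    split => //; split; first by move=> x; apply: le_trans (h00 x) (h0h x).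
    move=> gm [G0gm|[Ggm nz]].
      apply: le_trans (adm0 _ G0gm) _; rewrite /lint.
      apply: ge0_le_integral => //.
      - exact: mIm (G0S _ G0gm).
      - exact: measurable_funS mh0.
      - exact: measurable_funS mh.
    rewrite /lint.
    have mI := mIm _ Ggm.
    set I := (pf gm @` `[pa gm, pb gm] : set (Borel X)).
    have H1 : (1 <= \int[mu]_(x in I `&` N) h x)%E.
      rewrite (eq_integral (cst +oo%E)); last first.
        by move=> x; rewrite inE => -[_ Nx]; rewrite /h mem_set.
      rewrite integral_cst; last exact: measurableI.
      by rewrite gt0_mulye ?leey // lt0e nz measure_ge0.
    apply: le_trans H1 _; apply: ge0_subset_integral => //.
    - exact: measurableI.
    - exact: measurable_funS mh.
    - by move=> x _; apply: le_trans (h00 x) (h0h x).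
  have mhp : measurable_fun setT (fun x => h x `^ p)%E.
    exact: measurableT_comp (measurable_poweR p) mh.
  have mh0p : measurable_fun setT (fun x => h0 x `^ p)%E.
    exact: measurableT_comp (measurable_poweR p) mh0.
  rewrite (@ge0_negligible_integral _ _ _ m setT N _ mN measurableT mhp) //;
    last by move=> x _; exact: poweR_ge0.
  rewrite (eq_integral (fun x => h0 x `^ p)%E); last first.
    by move=> x; rewrite inE => -[_ Nx]; rewrite /h memNset.
  apply: ge0_subset_integral => //.
  - exact: measurableD.
  - by move=> x _; exact: poweR_ge0.
move=> gm Ggm nG.
have nG0 : ~ G0 gm by move=> h; apply: nG; left.
have muN : mu ((pf gm @` `[pa gm, pb gm] : set (Borel X)) `&` N) = 0%E.
  by apply: contrapT => nz; apply: nG; right; split => //; apply/eqP.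
exact: (@path_ug _ _ hX mu mu_nonatomic Gstar hsub f F mF N mN hNF rho hrho gm (hGstar _ Ggm) Ggm muN (hG0 _ Ggm nG0)).
Qed.
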